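(* Let $(V,\mathrm{dist})$ be a metric space and $p_1,\dots,p_n\in V$ (not necessarily distinct). For $t\in[n]$ let $Q_t:=\sum_{i=1}^t\sum_{j=1}^t\mathrm{dist}(p_i,p_j)$, and assume $Q_n>0$. For any $t\in[n]$, if $Q_t=0$ then $$\frac1t\ \ge\ \frac{\sum_{i=1}^n\mathrm{dist}(p_t,p_i)}{Q_n}.$$ *)

(* Defs.v *)
From mathcomp Require Import all_boot all_order all_algebra.
Set Implicit Arguments. Unset Strict Implicit. Unset Printing Implicit Defensive.
Import Order.TTheory GRing.Theory Num.Theory.
Local Open Scope ring_scope.

Definition is_metric (R : realFieldType) (V : Type) (dist : V -> V -> R) : Prop :=
  [/\ forall x y, 0 <= dist x y,
      forall x y, dist x y = 0 <-> x = y,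
      forall x y, dist x y = dist y x &
      forall x y z, dist x z <= dist x y + dist y z].

Definition Qsum (R : realFieldType) (V : Type) (dist : V -> V -> R)
  (p : nat -> V) (t : nat) : R :=
  \sum_(1 <= i < t.+1) \sum_(1 <= j < t.+1) dist (p i) (p j).

(* Main.v *)
Require Import Defs.
From mathcomp Require Import all_boot all_order all_algebra.
Import Order.TTheory GRing.Theory Num.Theory.
Local Open Scope ring_scope.

Lemma le_sum_term (R : realFieldType) (m n k : nat) (F : nat -> R) :
  (forall i, 0 <= F i) -> (m <= k < n)%N -> F k <= \sum_(m <= i < n) F i.
Proof.
move=> F0 hk.
rewrite (bigD1_seq k) ?mem_index_iota ?iota_uniq //=.
by rewrite lerDl sumr_ge0.
Qed.

Theorem lemma3p6 (R : realFieldType) (V : Type) (dist : V -> V -> R)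
  (p : nat -> V) (n t : nat) :
  is_metric dist ->
  0 < Qsum dist p n ->
  (1 <= t <= n)%N ->
  Qsum dist p t = 0 ->
  (\sum_(1 <= i < n.+1) dist (p t) (p i)) / Qsum dist p n <= t%:R^-1.
Proof.
case=> d0 deq dsym _ Qpos /andP[t1 tn] Qt0.
have eqt : forall i, (1 <= i <= t)%N -> p i = p t.
  move=> i hi; apply/deq/le_anti; rewrite d0 andbT -Qt0 /Qsum.
  apply: (@le_trans _ _ (\sum_(1 <= j < t.+1) dist (p i) (p j))).
    by apply: (le_sum_term _ _ _ _ (fun j => dist (p i) (p j))) => //; rewrite t1 leqnn.
  by apply: (le_sum_term _ _ _ _ (fun i => \sum_(1 <= j < t.+1) dist (p i) (p j))) => // k; apply: sumr_ge0.
set S := \sum_(1 <= i < n.+1) dist (p t) (p i).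
have QS : t%:R * S <= Qsum dist p n.
  rewrite /Qsum (big_cat_nat _ (n:=t.+1)) //=.
  apply: (@le_trans _ _ (\sum_(1 <= i < t.+1) \sum_(1 <= j < n.+1) dist (p i) (p j))).
    rewrite (eq_big_nat _ _ (F2 := fun _ => S)); last first.
      by move=> i hi; rewrite eqt.
    by rewrite sumr_const_nat subSS subn0 mulr_natl.
  by rewrite lerDl; apply: sumr_ge0 => i _; apply: sumr_ge0.
have tpos : 0 < t%:R :> R by rewrite ltr0n.
rewrite ler_pdivrMr // -(ler_pM2l tpos) mulrA mulfV ?mul1r //.
by rewrite gt_eqF.
Qed.
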